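(* Consider $K$ patches in an environment alternating periodically $e_1,e_2,e_1,e_2,\dots$ (state $e_1$ at even generations). Assume $\mathbb E(N_i(w)\log^+N_i(w))<\infty$ and $m_i(w)>0$ for all $i$ and $w\in\{e_1,e_2\}$, and that $D$ is irreducible and aperiodic. Let $\rho>0$ be such that $\rho^2$ is the maximal (Perron) eigenvalue of the two-generation mean matrix $A^{(2)}$ with entries $a_{ij}=\sum_{k=1}^K m_i(e_1)d_{ik}m_k(e_2)d_{kj}$. Then $$ 2\log\rho=\max\{R(f)-I(f): f\in\mathcal F_{\mathcal E}\}. $$
   Context: Model with environment: at each generation, every individual in patch $i$ independently produces $N_i(w)$ offspring, $w$ being the current environment state, with mean $m_i(w)$; each offspring independently moves from $i$ to $j$ with probability $d_{ij}$ ($D$ stochastic, environment-independent). $(X_n)$ is the Markov chain with transition matrix $D$. $\mathcal E:=\{1,\dots,K\}^2$ (ordered pairs of patches) and $B$ is the transition matrix of the Markov chain $(X_{2n},X_{2n+1})_{n\ge0}$ on $\mathcal E$, i.e. $B_{(i,j),(k,l)}=d_{jk}d_{kl}$. $\mathcal F_{\mathcal E}:=\{(f_E)_{E\in\mathcal E}: f_E\ge0,\ \sum_Ef_E=1\}$. For $f\in\mathcal F_{\mathcal E}$: $I(f):=\sup\{\sum_{E\in\mathcal E}f_E\log(v_E/(vB)_E): v=(v_E)_{E\in\mathcal E},\ v_E>0\ \forall E\}$ (possibly $+\infty$) and $R(f):=\sum_{E=(i,j)\in\mathcal E}f_E\log\big(m_i(e_1)m_j(e_2)\big)$. *)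

(* Defs.v *)
From Stdlib Require Import Reals Lra Lia ZArith.
Open Scope R_scope.

Inductive env := e1 | e2.

Fixpoint rsum (n : nat) (f : nat -> R) : R :=
  match n with
  | O => 0
  | S n' => rsum n' f + f n'
  end.

(* Matrices over indices 0..K-1 are functions nat -> nat -> R. *)
Fixpoint mpow (K : nat) (D : nat -> nat -> R) (n : nat) : nat -> nat -> R :=
  match n with
  | O => fun i j => if Nat.eqb i j then 1 else 0
  | S n' => fun i j => rsum K (fun k => mpow K D n' i k * D k j)
  end.

Definition stochastic (K : nat) (D : nat -> nat -> R) : Prop :=
  (forall i j, (i < K)%nat -> (j < K)%nat -> 0 <= D i j) /\
  (forall i, (i < K)%nat -> rsum K (fun j => D i j) = 1).

Definition irreducible (K : nat) (D : nat -> nat -> R) : Prop :=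
  forall i j, (i < K)%nat -> (j < K)%nat -> exists n, 0 < mpow K D n i j.

Definition aperiodic (K : nat) (D : nat -> nat -> R) : Prop :=
  forall i, (i < K)%nat ->
    forall d : nat, (forall n, 0 < mpow K D n i i -> Nat.divide d n) -> d = 1%nat.

Definition logp (x : R) : R := Rmax 0 (ln x).

Definition A2 (K : nat) (m : nat -> env -> R) (D : nat -> nat -> R) (i j : nat) : R :=
  rsum K (fun k => m i e1 * D i k * m k e2 * D k j).

(* lam is the maximal (Perron) eigenvalue of the real K x K matrix A:
   it is a (real) eigenvalue, and every complex eigenvalue a + i b
   (eigenvector u + i v, nonzero) satisfies |a + i b| <= lam. *)
Definition perron_eigenvalue (K : nat) (A : nat -> nat -> R) (lam : R) : Prop :=
  (exists x : nat -> R,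
      (exists i, (i < K)%nat /\ x i <> 0) /\
      forall i, (i < K)%nat -> rsum K (fun j => A i j * x j) = lam * x i) /\
  (forall (a b : R) (u v : nat -> R),
      (exists i, (i < K)%nat /\ (u i <> 0 \/ v i <> 0)) ->
      (forall i, (i < K)%nat ->
         rsum K (fun j => A i j * u j) = a * u i - b * v i /\
         rsum K (fun j => A i j * v j) = b * u i + a * v i) ->
      sqrt (a * a + b * b) <= lam).

(* Distributions f on E = {1..K}^2 (pairs (i,j) with i,j < K). *)
Definition in_FE (K : nat) (f : nat -> nat -> R) : Prop :=
  (forall i j, (i < K)%nat -> (j < K)%nat -> 0 <= f i j) /\
  rsum K (fun i => rsum K (fun j => f i j)) = 1.

Definition vpos (K : nat) (v : nat -> nat -> R) : Prop :=
  forall i j, (i < K)%nat -> (j < K)%nat -> 0 < v i j.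

(* (vB)_(k,l) with B_((i,j),(k,l)) = d_jk d_kl. *)
Definition vB (K : nat) (D : nat -> nat -> R) (v : nat -> nat -> R) (k l : nat) : R :=
  rsum K (fun i => rsum K (fun j => v i j * (D j k * D k l))).

(* sum_E f_E log(v_E/(vB)_E) (used only when it is finite, see Ival). *)
Definition Jfun (K : nat) (D : nat -> nat -> R) (f v : nat -> nat -> R) : R :=
  rsum K (fun k => rsum K (fun l => f k l * ln (v k l / vB K D v k l))).

(* Ival K D f c : I(f) is finite and equals c.  I(f) = +infinity exactly when
   either some term f_E log(v_E/(vB)_E) is +infinity (f_E > 0, (vB)_E = 0)
   for some positive v, or the set of values is unbounded above. *)
Definition Ival (K : nat) (D : nat -> nat -> R) (f : nat -> nat -> R) (c : R) : Prop :=
  (forall v, vpos K v -> forall k l, (k < K)%nat -> (l < K)%nat ->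
       0 < f k l -> 0 < vB K D v k l) /\
  is_lub (fun y => exists v, vpos K v /\ y = Jfun K D f v) c.

Definition Rfun (K : nat) (m : nat -> env -> R) (f : nat -> nat -> R) : R :=
  rsum K (fun i => rsum K (fun j => f i j * ln (m i e1 * m j e2))).

(* Main.v *)
Require Import Defs.
From Stdlib Require Import Reals Lra Lia Classical.
Open Scope R_scope.
Module CP.
From HB Require Import structures.
From mathcomp Require Import all_boot all_algebra.
From mathcomp Require Import Rstruct.
Import GRing.Theory Num.Theory.
Local Open Scope ring_scope.

Lemma rsum_big K (f : nat -> R) : rsum K f = \sum_(i < K) f i.
Proof. elim: K => [|K IH] /=; first by rewrite big_ord0. by rewrite big_ord_recr /= IH. Qed.

Lemma cont_horner (p : {poly R}) : continuity (fun x => p.[x]).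
Proof.
elim/poly_ind: p => [|p c IH].
  apply: (continuity_eq (f := fun _ => 0)); first by move=> x; rewrite horner0.
  exact: continuity_const.
apply: (continuity_eq (f := fun x => Rplus (Rmult p.[x] x) c)).
  by move=> x; rewrite hornerMXaddC.
apply: continuity_plus; last by apply: continuity_const => ? ?.
apply: continuity_mult => //; exact: derivable_continuous derivable_id.
Qed.

Definition MX K (B : nat -> nat -> R) : 'M[R]_K := \matrix_(i < K, j < K) B i j.

Lemma ev_cpmx K B x : map_mx (horner_eval x) (char_poly_mx (MX K B)) = x%:M - MX K B.
Proof.
apply/matrixP => i j; rewrite !mxE /horner_eval.
by rewrite hornerD hornerN hornerMn hornerX hornerC.
Qed.

Definition PP K B x := \det (x%:M - MX K B).
Definition AdjF K B x (i j : nat) : R :=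
  match (insub i : option 'I_K), (insub j : option 'I_K) with
  | Some a, Some b => (\adj (x%:M - MX K B)) a b
  | _, _ => 0 end.

Lemma PP_cont K B : continuity (PP K B).
Proof.
apply: (continuity_eq (f := fun x => (char_poly (MX K B)).[x])); last exact: cont_horner.
move=> x; by rewrite /PP -ev_cpmx det_map_mx.
Qed.

Lemma AdjF_cont K B i j : continuity (fun x => AdjF K B x i j).
Proof.
rewrite /AdjF; case: (insub i) => [a|]; last by apply: continuity_const => ? ?.
case: (insub j) => [b|]; last by apply: continuity_const => ? ?.
apply: (continuity_eq (f := fun x => ((\adj (char_poly_mx (MX K B))) a b).[x])); last exact: cont_horner.
by move=> x; rewrite -ev_cpmx -map_mx_adj [in RHS]mxE.
Qed.

Lemma AdjF_id K B x i k : (i < K)%coq_nat -> (k < K)%coq_nat ->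
  rsum K (fun j => ((if Nat.eqb i j then x else 0) - B i j) * AdjF K B x j k)
  = if Nat.eqb i k then PP K B x else 0.
Proof.
move=> /ltP Hi /ltP Hk.
have := congr1 (fun M : 'M[R]_K => M (Ordinal Hi) (Ordinal Hk)) (mul_mx_adj (x%:M - MX K B)).
rewrite !mxE /= => E.
rewrite rsum_big.
have -> : (if Nat.eqb i k then PP K B x else 0) = (\det (x%:M - MX K B)) *+ (Ordinal Hi == Ordinal Hk).
  case: (Nat.eqb_spec i k) => [e|ne] /=.
    have -> : Ordinal Hi = Ordinal Hk by apply: val_inj.
    by rewrite eqxx.
  by case: eqP => // [[]].
rewrite -E; apply: eq_bigr => b _.
rewrite /AdjF valK.
case: insubP => [c _ ck|]; last by rewrite Hk.
have -> : c = Ordinal Hk by apply: val_inj.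
rewrite !mxE /=.
congr (_ * _); congr (_ - _).
case: (Nat.eqb_spec i b) => [e|ne].
  have -> : Ordinal Hi = b by apply: val_inj.
  by rewrite eqxx.
by case: eqP => // e; case: ne; rewrite -e.
Qed.


Lemma PP_tr K B x : PP K (fun i j => B j i) x = PP K B x.
Proof.
rewrite /PP -det_tr; congr (\det _).
by apply/matrixP => i j; rewrite !mxE eq_sym.
Qed.

Lemma MXv K B (w : 'cV[R]_K) (i : 'I_K) :
  (MX K B *m w) i 0 = rsum K (fun j => B i j * match (insub j : option 'I_K) with Some a => w a 0 | None => 0 end).
Proof.
rewrite rsum_big mxE; apply: eq_bigr => j _; by rewrite mxE valK.
Qed.

Lemma PP0_right K B x : PP K B x = 0 ->
  exists v : nat -> R, (exists i, (i < K)%coq_nat /\ v i <> 0) /\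
    forall i, (i < K)%coq_nat -> rsum K (fun j => B i j * v j) = x * v i.
Proof.
move=> H0.
have /det0P [w Hw Hker] : \det (x%:M - MX K B)^T == 0 by rewrite det_tr; apply/eqP.
have Hk : (x%:M - MX K B) *m w^T = 0.
  by rewrite -[LHS]trmxK trmx_mul trmxK Hker trmx0.
have HM : MX K B *m w^T = x *: w^T.
  by move: Hk; rewrite mulmxBl mul_scalar_mx => /eqP; rewrite subr_eq0 => /eqP ->.
exists (fun j => match (insub j : option 'I_K) with Some a => w^T a 0 | None => 0 end).
split.
  have [a Ha] : exists a, w 0 a != 0.
    apply/existsP; apply: contraNT Hw => /existsPn H; apply/eqP/rowP => a.
    rewrite mxE; apply/eqP; exact: negbNE (H a).
  exists (val a); split; first by apply/ltP; exact: ltn_ord.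
  by rewrite valK mxE; apply/eqP.
move=> i /ltP Hi.
have := congr1 (fun M : 'cV[R]_K => M (Ordinal Hi) 0) HM.
rewrite MXv /= => ->.
rewrite mxE.
case: insubP => [c _ ci|]; last by rewrite Hi.
by have -> : c = Ordinal Hi by apply: val_inj.
Qed.

Lemma right_PP0 K B x (v : nat -> R) : (exists i, (i < K)%coq_nat /\ v i <> 0) ->
    (forall i, (i < K)%coq_nat -> rsum K (fun j => B i j * v j) = x * v i) -> PP K B x = 0.
Proof.
move=> [i0 [/ltP Hi0 Hv0]] Hv.
apply/eqP; apply: contraT => Hd.
have Hu : (x%:M - MX K B) \in unitmx by rewrite unitmxE unitfE.
pose vc : 'cV[R]_K := \col_j v j.
have HMv : MX K B *m vc = x *: vc.
  apply/colP => i.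
  have E := Hv i (elimT ltP (ltn_ord i)).
  have -> : (MX K B *m vc) i 0 = rsum K (fun j => B i j * v j).
    rewrite MXv rsum_big rsum_big; apply: eq_bigr => j _.
    by rewrite valK mxE.
  by rewrite E !mxE.
have Hz : (x%:M - MX K B) *m vc = 0 by rewrite mulmxBl mul_scalar_mx HMv subrr.
have := mulKmx Hu vc; rewrite Hz mulmx0 => /colP /(_ (Ordinal Hi0)).
by rewrite !mxE => /esym.
Qed.


End CP.
Set Bullet Behavior "Strict Subproofs".


Lemma rsum_ext K f g : (forall i, (i < K)%nat -> f i = g i) -> rsum K f = rsum K g.
Proof. induction K; intros H; simpl; auto. rewrite IHK by (intros; apply H; lia). rewrite H by lia. auto. Qed.

Lemma rsum_plus K f g : rsum K (fun i => f i + g i) = rsum K f + rsum K g.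
Proof. induction K; simpl; [lra|]. rewrite IHK. lra. Qed.

Lemma rsum_minus K f g : rsum K (fun i => f i - g i) = rsum K f - rsum K g.
Proof. induction K; simpl; [lra|]. rewrite IHK. lra. Qed.

Lemma rsum_scal K c f : rsum K (fun i => c * f i) = c * rsum K f.
Proof. induction K; simpl; [lra|]. rewrite IHK. lra. Qed.

Lemma rsum_scal_r K c f : rsum K (fun i => f i * c) = rsum K f * c.
Proof. induction K; simpl; [lra|]. rewrite IHK. lra. Qed.

Lemma rsum_zero K : rsum K (fun _ => 0) = 0.
Proof. induction K; simpl; lra. Qed.

Lemma rsum_le K f g : (forall i, (i < K)%nat -> f i <= g i) -> rsum K f <= rsum K g.
Proof. induction K; intros H; simpl; [lra|]. assert (H1 := H K ltac:(lia)). assert (rsum K f <= rsum K g) by (apply IHK; intros; apply H; lia). lra. Qed.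

Lemma rsum_nonneg K f : (forall i, (i < K)%nat -> 0 <= f i) -> 0 <= rsum K f.
Proof. intros H. rewrite <- (rsum_zero K). apply rsum_le. auto. Qed.

Lemma rsum_swap K L (F : nat -> nat -> R) :
  rsum K (fun i => rsum L (fun j => F i j)) = rsum L (fun j => rsum K (fun i => F i j)).
Proof.
induction K; simpl. rewrite rsum_zero. auto.
rewrite IHK. rewrite <- rsum_plus. auto.
Qed.

Lemma rsum_pos_ex K f : 0 < rsum K f -> exists i, (i < K)%nat /\ 0 < f i.
Proof.
intros H. destruct (classic (exists i, (i < K)%nat /\ 0 < f i)) as [E|E]; auto.
exfalso. assert (rsum K f <= rsum K (fun _ => 0)).
apply rsum_le. intros i Hi. destruct (Rle_or_lt (f i) 0); auto. exfalso; apply E; eauto.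
rewrite rsum_zero in H0. lra.
Qed.

Lemma rsum_ge_term K f i : (forall j, (j < K)%nat -> 0 <= f j) -> (i < K)%nat -> f i <= rsum K f.
Proof.
induction K; intros H Hi; [lia|]. simpl.
destruct (Nat.eq_dec i K). subst. assert (0 <= rsum K f) by (apply rsum_nonneg; intros; apply H; lia). lra.
assert (f i <= rsum K f) by (apply IHK; [intros; apply H; lia| lia]). assert (0 <= f K) by (apply H; lia). lra.
Qed.

Lemma rsum_pos K f i : (forall j, (j < K)%nat -> 0 <= f j) -> (i < K)%nat -> 0 < f i -> 0 < rsum K f.
Proof. intros. assert (f i <= rsum K f) by (apply rsum_ge_term; auto). lra. Qed.

Lemma rsum_delta_l K x f i : (i < K)%nat ->
  rsum K (fun j => (if Nat.eqb i j then x else 0) * f j) = x * f i.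
Proof.
induction K; intros Hi; [lia|]. simpl.
destruct (Nat.eq_dec i K).
- subst. rewrite Nat.eqb_refl.
  rewrite (rsum_ext K _ (fun _ => 0)). rewrite rsum_zero. lra.
  intros j Hj. destruct (Nat.eqb_spec K j); [lia|]. lra.
- rewrite IHK by lia. destruct (Nat.eqb_spec i K); [lia|]. lra.
Qed.

Lemma rsum_delta_r K x f i : (i < K)%nat ->
  rsum K (fun j => f j * (if Nat.eqb j i then x else 0)) = f i * x.
Proof.
intros Hi. rewrite (rsum_ext K _ (fun j => (if Nat.eqb i j then x else 0) * f j)).
rewrite rsum_delta_l; auto. lra.
intros j Hj. rewrite Nat.eqb_sym. lra.
Qed.

Lemma rsum_abs K f : Rabs (rsum K f) <= rsum K (fun i => Rabs (f i)).
Proof. induction K; simpl. rewrite Rabs_R0; lra. eapply Rle_trans. apply Rabs_triang. lra. Qed.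

Lemma argmin K f : (1 <= K)%nat -> exists i0, (i0 < K)%nat /\ forall i, (i < K)%nat -> f i0 <= f i.
Proof.
induction K; intros HK; [lia|].
destruct (Nat.eq_dec K 0). subst. exists 0%nat. split; auto. intros i Hi. assert (i = 0%nat) by lia. subst; lra.
destruct (IHK ltac:(lia)) as [i0 [Hi0 H]].
destruct (Rle_or_lt (f i0) (f K)).
exists i0. split. lia. intros i Hi. destruct (Nat.eq_dec i K). subst; auto. apply H; lia.
exists K. split. lia. intros i Hi. destruct (Nat.eq_dec i K). subst; lra. assert (f i0 <= f i) by (apply H; lia). lra.
Qed.

Lemma continuity_rsum K (G : R -> nat -> R) :
  (forall i, continuity (fun x => G x i)) -> continuity (fun x => rsum K (G x)).
Proof.
intros H. induction K; simpl.
apply continuity_const. intros ? ?; auto.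
apply (continuity_plus (fun x => rsum K (G x)) (fun x => G x K)); auto.
Qed.

Fixpoint mn (n : nat) (f : nat -> R) : R :=
  match n with O => f O | S n' => Rmin (mn n' f) (f (S n')) end.

Lemma mn_le n f i : (i <= n)%nat -> mn n f <= f i.
Proof.
induction n; intros Hi; simpl. assert (i = 0%nat) by lia; subst; lra.
destruct (Nat.eq_dec i (S n)). subst. apply Rmin_r.
eapply Rle_trans. apply Rmin_l. apply IHn. lia.
Qed.

Lemma mn_attained n f : exists i, (i <= n)%nat /\ mn n f = f i.
Proof.
induction n; simpl. exists 0%nat; split; auto.
destruct IHn as [i [Hi E]]. unfold Rmin. destruct (Rle_dec (mn n f) (f (S n))).
exists i. split; auto.
exists (S n); split; auto.
Qed.

From Stdlib Require Import FunctionalExtensionality.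

Lemma continuity_Rmin f g : continuity f -> continuity g -> continuity (fun x => Rmin (f x) (g x)).
Proof.
intros Hf Hg.
replace (fun x => Rmin (f x) (g x)) with (fun x => (f x + g x + (-1) * Rabs (f x - g x)) * /2).
2:{ apply functional_extensionality. intros x. unfold Rmin. destruct (Rle_dec (f x) (g x)).
  rewrite Rabs_left1 by lra. lra. rewrite Rabs_right by lra. lra. }
apply (continuity_mult (fun x => f x + g x + (-1) * Rabs (f x - g x)) (fun _ => /2)).
apply (continuity_plus (fun x => f x + g x) (fun x => (-1) * Rabs (f x - g x))).
apply (continuity_plus f g); auto.
apply (continuity_mult (fun _ => -1) (fun x => Rabs (f x - g x))).
apply continuity_const; intros ? ?; auto.
apply (continuity_comp (fun x => f x - g x) Rabs).
apply (continuity_minus f g); auto. apply Rcontinuity_abs.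
apply continuity_const; intros ? ?; auto.
Qed.

Lemma continuity_mn n (G : R -> nat -> R) :
  (forall i, continuity (fun x => G x i)) -> continuity (fun x => mn n (G x)).
Proof.
intros H. induction n; simpl. auto.
apply (continuity_Rmin (fun x => mn n (G x)) (fun x => G x (S n))); auto.
Qed.


Definition nonnegM K (B : nat -> nat -> R) := forall i j, (i < K)%nat -> (j < K)%nat -> 0 <= B i j.

Lemma mpow_nonneg K B n : nonnegM K B -> nonnegM K (mpow K B n).
Proof.
intros HB. induction n; intros i j Hi Hj; simpl.
destruct (Nat.eqb i j); lra.
apply rsum_nonneg. intros k Hk. apply Rmult_le_pos; auto.
Qed.

Lemma mpow_add K B a b i j : (j < K)%nat ->
  mpow K B (a + b) i j = rsum K (fun t => mpow K B a i t * mpow K B b t j).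
Proof.
revert j. induction b; intros j Hj.
- rewrite Nat.add_0_r. simpl. rewrite rsum_delta_r; auto. lra.
- rewrite Nat.add_succ_r. cbn [mpow].
  transitivity (rsum K (fun k => rsum K (fun t => mpow K B a i t * mpow K B b t k * B k j))).
  { apply rsum_ext. intros k Hk. rewrite IHb by auto. rewrite <- rsum_scal_r. auto. }
  rewrite rsum_swap. apply rsum_ext. intros t Ht. rewrite <- rsum_scal.
  apply rsum_ext; intros; lra.
Qed.

Lemma mpow1 K B i j : (i < K)%nat -> mpow K B 1 i j = B i j.
Proof. intros Hi. cbn [mpow]. rewrite rsum_delta_l; auto; lra. Qed.

Lemma prod_pos a b : 0 <= a -> 0 <= b -> 0 < a * b -> 0 < a /\ 0 < b.
Proof. intros. destruct (Rle_lt_or_eq_dec 0 a H); destruct (Rle_lt_or_eq_dec 0 b H0); subst; try nra. Qed.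

Lemma mpow_pos K B a b i t j : nonnegM K B -> (i < K)%nat -> (t < K)%nat -> (j < K)%nat ->
  0 < mpow K B a i t -> 0 < mpow K B b t j -> 0 < mpow K B (a + b) i j.
Proof.
intros HB Hi Ht Hj H1 H2. rewrite mpow_add by auto.
apply (rsum_pos K _ t); auto.
intros k Hk. apply Rmult_le_pos; apply mpow_nonneg; auto.
apply Rmult_lt_0_compat; auto.
Qed.

Definition reach K B := forall i j, (i < K)%nat -> (j < K)%nat -> exists n, 0 < mpow K B n i j.

Definition tr (B : nat -> nat -> R) i j := B j i.

Lemma mpow_tr K B n i j : (i < K)%nat -> (j < K)%nat -> mpow K (tr B) n i j = mpow K B n j i.
Proof.
revert i j. induction n; intros i j Hi Hj.
simpl. rewrite Nat.eqb_sym. auto.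
change (S n) with (1 + n)%nat. rewrite (mpow_add K B 1 n j i) by auto.
simpl. rewrite (rsum_ext K (fun k => mpow K (tr B) n i k * tr B k j)
  (fun k => mpow K B 1 j k * mpow K B n k i)).
auto. intros k Hk. rewrite IHn by auto. rewrite mpow1 by auto. unfold tr. lra.
Qed.

Lemma reach_tr K B : reach K B -> reach K (tr B).
Proof. intros H i j Hi Hj. destruct (H j i Hj Hi) as [n Hn]. exists n. rewrite mpow_tr; auto. Qed.

Lemma stoch_nonneg K D : stochastic K D -> nonnegM K D.
Proof. intros [H _]. exact H. Qed.

Lemma A2_nonneg K m D : stochastic K D -> (forall i w, (i < K)%nat -> 0 < m i w) -> nonnegM K (A2 K m D).
Proof.
intros HD Hm i j Hi Hj. unfold A2. apply rsum_nonneg. intros k Hk.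
pose proof (Hm i e1 Hi). pose proof (Hm k e2 Hk). pose proof (proj1 HD i k Hi Hk). pose proof (proj1 HD k j Hk Hj).
repeat apply Rmult_le_pos; lra.
Qed.

Lemma odd_loop K D i : (i < K)%nat -> aperiodic K D -> exists q, 0 < mpow K D (2 * q + 1) i i.
Proof.
intros Hi Hap. destruct (classic (exists q, 0 < mpow K D (2 * q + 1) i i)) as [E|E]; auto.
exfalso. assert (2%nat = 1%nat); [|lia].
apply (Hap i Hi 2%nat). intros n Hn.
destruct (Nat.Even_or_Odd n) as [[q Hq]|[q Hq]].
exists q. lia. exfalso. apply E. exists q. rewrite <- Hq. auto.
Qed.

Lemma even_path K D i j : stochastic K D -> irreducible K D -> aperiodic K D -> (i < K)%nat -> (j < K)%nat ->
  exists q, 0 < mpow K D (2 * q) i j.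
Proof.
intros HD Hirr Hap Hi Hj. destruct (Hirr i j Hi Hj) as [n Hn].
destruct (Nat.Even_or_Odd n) as [[q Hq]|[q Hq]].
exists q. rewrite <- Hq; auto.
destruct (odd_loop K D i Hi Hap) as [q' Hq'].
exists (q + q' + 1)%nat.
replace (2 * (q + q' + 1))%nat with ((2 * q' + 1) + n)%nat by lia.
apply (mpow_pos K D _ _ i i j); auto. apply stoch_nonneg; auto.
Qed.

Lemma transfer K m D : stochastic K D -> (forall i w, (i < K)%nat -> 0 < m i w) ->
  forall q i j, (i < K)%nat -> (j < K)%nat -> 0 < mpow K D (2 * q) i j -> 0 < mpow K (A2 K m D) q i j.
Proof.
intros HD Hm. induction q; intros i j Hi Hj H.
simpl in *. auto.
replace (2 * S q)%nat with (2 * q + 2)%nat in H by lia.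
rewrite mpow_add in H by auto.
destruct (rsum_pos_ex _ _ H) as [t [Ht Hpos]].
apply prod_pos in Hpos; try (apply mpow_nonneg; [apply stoch_nonneg; auto| |]; auto).
destruct Hpos as [H1 H2].
assert (H3 := IHq i t Hi Ht H1).
change 2%nat with (1 + 1)%nat in H2. rewrite mpow_add in H2 by auto.
destruct (rsum_pos_ex _ _ H2) as [k [Hk Hpos']].
rewrite mpow1 in Hpos' by auto. rewrite mpow1 in Hpos' by auto.
apply prod_pos in Hpos'; try (apply (proj1 HD); auto). destruct Hpos' as [H4 H5].
simpl. apply (rsum_pos K _ t); auto.
intros k' Hk'. apply Rmult_le_pos. apply mpow_nonneg; auto. apply A2_nonneg; auto. apply A2_nonneg; auto.
apply Rmult_lt_0_compat; auto.
unfold A2. apply (rsum_pos K _ k); auto.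
intros k' Hk'. pose proof (Hm t e1 Ht). pose proof (Hm k' e2 Hk'). pose proof (proj1 HD t k' Ht Hk'). pose proof (proj1 HD k' j Hk' Hj).
repeat apply Rmult_le_pos; lra.
pose proof (Hm t e1 Ht). pose proof (Hm k e2 Hk).
repeat apply Rmult_lt_0_compat; auto.
Qed.

Lemma A2_reach K m D : stochastic K D -> (forall i w, (i < K)%nat -> 0 < m i w) ->
  irreducible K D -> aperiodic K D -> reach K (A2 K m D).
Proof.
intros HD Hm Hirr Hap i j Hi Hj. destruct (even_path K D i j HD Hirr Hap Hi Hj) as [q Hq].
exists q. apply transfer; auto.
Qed.


Lemma gen_nz K B x w c i : nonnegM K B -> (forall j, (j < K)%nat -> 0 <= w j) -> (i < K)%nat ->
  x * w i - rsum K (fun j => B i j * w j) = c -> 0 < c -> w i <> 0.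
Proof.
intros HB Hw Hi E Hc Hz. rewrite Hz in E.
assert (0 <= rsum K (fun j => B i j * w j)). apply rsum_nonneg; intros; apply Rmult_le_pos; auto.
lra.
Qed.

Definition Ssum K (B : nat -> nat -> R) := rsum K (fun i => rsum K (fun j => B i j)).

Lemma row_le_S K B i : nonnegM K B -> (i < K)%nat -> rsum K (fun j => B i j) <= Ssum K B.
Proof.
intros HB Hi. unfold Ssum. apply (rsum_ge_term K (fun i => rsum K (fun j => B i j))); auto.
intros; apply rsum_nonneg; auto.
Qed.

Lemma gen_large K B x w c : (1 <= K)%nat -> nonnegM K B -> Ssum K B < x ->
  (forall i, (i < K)%nat -> x * w i - rsum K (fun j => B i j * w j) = c i) ->
  (forall i, (i < K)%nat -> 0 < c i) -> forall i, (i < K)%nat -> 0 < w i.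
Proof.
intros HK HB Hx E Hc.
destruct (argmin K w HK) as [i0 [Hi0 Hmin]].
assert (0 < w i0).
{ destruct (Rlt_or_le 0 (w i0)); auto. exfalso.
  assert (rsum K (fun j => B i0 j) * w i0 <= rsum K (fun j => B i0 j * w j)).
  { rewrite <- rsum_scal_r. apply rsum_le. intros j Hj. apply Rmult_le_compat_l; auto. }
  pose proof (row_le_S K B i0 HB Hi0). pose proof (E i0 Hi0). pose proof (Hc i0 Hi0).
  assert (0 <= rsum K (fun j => B i0 j)) by (apply rsum_nonneg; auto).
  nra. }
intros i Hi. pose proof (Hmin i Hi). lra.
Qed.

Lemma lemX K B y t : (1 <= K)%nat -> nonnegM K B -> (forall i, (i < K)%nat -> 0 < y i) ->
  (forall i, (i < K)%nat -> t * y i <= rsum K (fun j => B i j * y j)) ->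
  exists x, t <= x /\ CP.PP K B x = 0.
Proof.
intros HK HB Hy Hsup. apply NNPP. intro Hno.
assert (Hne : forall x, t <= x -> CP.PP K B x <> 0). { intros x Hx E. apply Hno; eauto. }
set (P := CP.PP K B).
set (q := fun x i => rsum K (fun j => CP.AdjF K B x i j * y j)).
set (w := fun x i => P x * q x i).
assert (Wq : forall x i, (i < K)%nat -> x * q x i - rsum K (fun j => B i j * q x j) = P x * y i).
{ intros x i Hi.
  transitivity (rsum K (fun j => ((if Nat.eqb i j then x else 0) - B i j) * q x j)).
  { rewrite <- (rsum_delta_l K x (q x) i Hi). rewrite <- rsum_minus. apply rsum_ext; intros; lra. }
  unfold q.
  transitivity (rsum K (fun k => rsum K (fun j => ((if Nat.eqb i j then x else 0) - B i j) * CP.AdjF K B x j k) * y k)).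
  { rewrite (rsum_ext K _ (fun j => rsum K (fun k => ((if Nat.eqb i j then x else 0) - B i j) * CP.AdjF K B x j k * y k))).
    rewrite rsum_swap. apply rsum_ext. intros k Hk. rewrite <- rsum_scal_r. auto.
    intros j Hj. rewrite <- rsum_scal. apply rsum_ext; intros; lra. }
  rewrite (rsum_ext K _ (fun k => (if Nat.eqb i k then P x else 0) * y k)).
  apply rsum_delta_l; auto.
  intros k Hk. f_equal. apply CP.AdjF_id; auto. }
assert (Ww : forall x i, (i < K)%nat -> x * w x i - rsum K (fun j => B i j * w x j) = P x * P x * y i).
{ intros x i Hi. unfold w. rewrite (rsum_ext K _ (fun j => P x * (B i j * q x j))) by (intros; lra).
  rewrite rsum_scal. rewrite Rmult_assoc. rewrite <- Wq by auto. lra. }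
set (F := fun x => mn (K - 1) (w x)).
assert (Fcont : continuity F).
{ unfold F. apply continuity_mn. intros i. unfold w.
  apply (continuity_mult P (fun x => q x i)). apply CP.PP_cont.
  unfold q. apply (continuity_rsum K (fun x j => CP.AdjF K B x i j * y j)).
  intros j. apply (continuity_mult (fun x => CP.AdjF K B x i j) (fun _ => y j)).
  apply CP.AdjF_cont. apply continuity_const; intros ? ?; auto. }
assert (HSn : 0 <= Ssum K B). { unfold Ssum; apply rsum_nonneg; intros; apply rsum_nonneg; auto. }
set (x0 := Rmax t 0 + Ssum K B + 1).
assert (Hx0t : t < x0). { unfold x0. pose proof (Rmax_l t 0). lra. }
assert (Hx0S : Ssum K B < x0). { unfold x0. pose proof (Rmax_r t 0). lra. }
assert (HPy : forall x, t <= x -> forall i, (i < K)%nat -> 0 < P x * P x * y i).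
{ intros x Hx i Hi. apply Rmult_lt_0_compat; auto. exact (Rsqr_pos_lt _ (Hne x Hx)). }
assert (Fx0 : 0 < F x0).
{ unfold F. destruct (mn_attained (K - 1) (w x0)) as [i [Hi E]]. rewrite E.
  apply (gen_large K B x0 (w x0) (fun i => P x0 * P x0 * y i)); auto. intros; apply HPy; [lra|auto]. lia. }
destruct (Rle_or_lt (F t) 0) as [Ft|Ft].
- assert (Hz : exists z, t <= z /\ F z = 0).
  { destruct (Rle_lt_or_eq_dec _ _ Ft) as [Ft'|Ft'].
    destruct (IVT F t x0 Fcont Hx0t Ft' Fx0) as [z [Hz1 Hz2]]. exists z; split; [lra|auto].
    exists t; split; [lra|auto]. }
  destruct Hz as [z [Hz1 Hz2]].
  unfold F in Hz2. destruct (mn_attained (K - 1) (w z)) as [i [Hi E]].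
  apply (gen_nz K B z (w z) (P z * P z * y i) i).
  + auto.
  + intros j Hj. rewrite <- Hz2. apply mn_le. lia.
  + lia.
  + apply Ww. lia.
  + apply HPy; auto; lia.
  + rewrite <- E; auto.
- assert (Wpos : forall i, (i < K)%nat -> 0 < w t i).
  { intros i Hi. eapply Rlt_le_trans. apply Ft. unfold F. apply mn_le. lia. }
  destruct (argmin K (fun i => w t i / y i) HK) as [i2 [Hi2 Hmin]].
  set (kap := w t i2 / y i2).
  assert (Hkap : 0 < kap). { unfold kap. apply Rdiv_lt_0_compat; auto. }
  set (z := fun i => w t i - kap * y i).
  assert (Hz0 : forall i, (i < K)%nat -> 0 <= z i).
  { intros i Hi. unfold z. pose proof (Hmin i Hi). fold kap in H. pose proof (Hy i Hi).
    apply Rmult_le_compat_r with (r := y i) in H; [|lra]. unfold Rdiv in H.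
    rewrite Rmult_assoc in H. rewrite Rinv_l in H by lra. lra. }
  apply (gen_nz K B t z (P t * P t * y i2 + kap * (rsum K (fun j => B i2 j * y j) - t * y i2)) i2); auto.
  all: cycle 0.
  + unfold z. rewrite (rsum_ext K _ (fun j => B i2 j * w t j - kap * (B i2 j * y j))) by (intros; lra).
    rewrite rsum_minus. rewrite rsum_scal. pose proof (Ww t i2 Hi2). lra.
  + pose proof (Hsup i2 Hi2). pose proof (HPy t (Rle_refl t) i2 Hi2). nra.
  + unfold z, kap. unfold Rdiv. rewrite Rmult_assoc. rewrite Rinv_l. lra. pose proof (Hy i2 Hi2). lra.
Qed.


Definition nz K (v : nat -> R) := exists i, (i < K)%nat /\ v i <> 0.
Definition eigR K (B : nat -> nat -> R) x (v : nat -> R) :=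
  forall i, (i < K)%nat -> rsum K (fun j => B i j * v j) = x * v i.

Lemma PP0_right' K B x : CP.PP K B x = 0 -> exists v, nz K v /\ eigR K B x v.
Proof. intros H. destruct (CP.PP0_right K B x H) as [v [H1 H2]]. exists v. split. exact H1. exact H2. Qed.

Lemma right_PP0' K B x v : nz K v -> eigR K B x v -> CP.PP K B x = 0.
Proof. intros H1 H2. exact (CP.right_PP0 K B x v H1 H2). Qed.

Lemma PP_tr' K B x : CP.PP K (tr B) x = CP.PP K B x.
Proof. exact (CP.PP_tr K B x). Qed.

Lemma nonneg_tr K B : nonnegM K B -> nonnegM K (tr B).
Proof. intros H i j Hi Hj. unfold tr. auto. Qed.

Definition pv K B N (w : nat -> R) i := rsum N (fun n => rsum K (fun j => mpow K B n i j * w j)).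

Lemma pv_lin K B N a b u v i :
  pv K B N (fun j => a * u j + b * v j) i = a * pv K B N u i + b * pv K B N v i.
Proof.
unfold pv. rewrite <- !rsum_scal. rewrite <- rsum_plus. apply rsum_ext. intros n Hn.
rewrite <- !rsum_scal. rewrite <- rsum_plus. apply rsum_ext. intros; lra.
Qed.

Lemma pv_comm K B N u i : (i < K)%nat ->
  rsum K (fun j => B i j * pv K B N u j) = pv K B N (fun j => rsum K (fun k => B j k * u k)) i.
Proof.
intros Hi. unfold pv.
rewrite (rsum_ext K _ (fun j => rsum N (fun n => rsum K (fun k => B i j * mpow K B n j k * u k)))).
2:{ intros j Hj. rewrite <- rsum_scal. apply rsum_ext. intros n Hn. rewrite <- rsum_scal. apply rsum_ext; intros; lra. }
rewrite rsum_swap. apply rsum_ext. intros n Hn.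
transitivity (rsum K (fun k => mpow K B (S n) i k * u k)).
- rewrite rsum_swap. apply rsum_ext. intros k Hk.
  change (S n) with (1 + n)%nat. rewrite mpow_add by auto. rewrite <- rsum_scal_r.
  apply rsum_ext. intros j Hj. rewrite mpow1 by auto. lra.
- rewrite (rsum_ext K (fun j => mpow K B n i j * rsum K (fun k => B j k * u k))
     (fun j => rsum K (fun k => mpow K B n i j * B j k * u k))).
  2:{ intros j Hj. rewrite <- rsum_scal. apply rsum_ext; intros; lra. }
  rewrite rsum_swap. apply rsum_ext. intros k Hk. cbn [mpow]. rewrite <- rsum_scal_r. auto.
Qed.

Lemma choose_N K (P : nat -> nat -> Prop) : (forall i, (i < K)%nat -> exists n, P i n) ->
  exists N, forall i, (i < K)%nat -> exists n, (n < N)%nat /\ P i n.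
Proof.
induction K; intros H. exists 0%nat. intros; lia.
destruct IHK as [N HN]. intros; apply H; lia.
destruct (H K ltac:(lia)) as [n Hn].
exists (S (Nat.max N n)). intros i Hi. destruct (Nat.eq_dec i K). subst. exists n. split; auto; lia.
destruct (HN i ltac:(lia)) as [n' [Hn' Hp]]. exists n'. split; auto; lia.
Qed.

Lemma pv_nonneg K B N w i : nonnegM K B -> (forall j, (j < K)%nat -> 0 <= w j) -> (i < K)%nat -> 0 <= pv K B N w i.
Proof.
intros HB Hw Hi. unfold pv. apply rsum_nonneg. intros n Hn. apply rsum_nonneg. intros j Hj.
apply Rmult_le_pos; auto. apply mpow_nonneg; auto.
Qed.

Lemma spread K B w j0 : nonnegM K B -> reach K B -> (forall j, (j < K)%nat -> 0 <= w j) ->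
  (j0 < K)%nat -> 0 < w j0 -> exists N, forall i, (i < K)%nat -> 0 < pv K B N w i.
Proof.
intros HB Hr Hw Hj0 Hwj.
destruct (choose_N K (fun i n => 0 < mpow K B n i j0)) as [N HN].
intros i Hi. apply Hr; auto.
exists N. intros i Hi. destruct (HN i Hi) as [n [Hn Hp]].
unfold pv. apply (rsum_pos N _ n); auto.
intros n' Hn'. apply rsum_nonneg. intros j Hj. apply Rmult_le_pos; auto. apply mpow_nonneg; auto.
apply (rsum_pos K _ j0); auto.
intros j Hj. apply Rmult_le_pos; auto. apply mpow_nonneg; auto.
apply Rmult_lt_0_compat; auto.
Qed.

Lemma pv_ext K B N u v i : (forall j, (j < K)%nat -> u j = v j) -> pv K B N u i = pv K B N v i.
Proof. intros H. unfold pv. apply rsum_ext. intros n Hn. apply rsum_ext. intros j Hj. rewrite H; auto. Qed.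

Lemma pv_defect K B N s u i : (i < K)%nat ->
  rsum K (fun j => B i j * pv K B N u j) - s * pv K B N u i =
  pv K B N (fun j => rsum K (fun k => B j k * u k) - s * u j) i.
Proof.
intros Hi. rewrite pv_comm by auto.
transitivity (pv K B N (fun j => 1 * rsum K (fun k => B j k * u k) + (- s) * u j) i).
rewrite pv_lin. lra. apply pv_ext. intros; lra.
Qed.

Lemma pv_ge K B N w i : nonnegM K B -> (forall j, (j < K)%nat -> 0 <= w j) -> (i < K)%nat -> (1 <= N)%nat ->
  w i <= pv K B N w i.
Proof.
intros HB Hw Hi HN. unfold pv.
assert (E : rsum K (fun j => mpow K B 0 i j * w j) = w i).
{ cbn [mpow]. rewrite rsum_delta_l; auto. lra. }
rewrite <- E at 1.
apply (rsum_ge_term N (fun n => rsum K (fun j => mpow K B n i j * w j)) 0); [|lia].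
intros n Hn. apply rsum_nonneg. intros j Hj. apply Rmult_le_pos; auto. apply mpow_nonneg; auto.
Qed.

Lemma improve K B s w j0 : (1 <= K)%nat -> nonnegM K B -> reach K B ->
  (forall t y, s < t -> (forall i, (i < K)%nat -> 0 < y i) ->
     ~ (forall i, (i < K)%nat -> t * y i <= rsum K (fun j => B i j * y j))) ->
  (forall j, (j < K)%nat -> 0 <= w j) -> (j0 < K)%nat -> 0 < w j0 ->
  (forall i, (i < K)%nat -> s * w i <= rsum K (fun j => B i j * w j)) ->
  exists h, (forall i, (i < K)%nat -> 0 < h i) /\ eigR K B s h.
Proof.
intros HK HB Hr Hno Hw Hj0 Hwj Hsup.
destruct (spread K B w j0 HB Hr Hw Hj0 Hwj) as [N1 HN1].
set (y1 := pv K B N1 w).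
assert (Hz1 : forall i, (i < K)%nat -> 0 <= rsum K (fun j => B i j * y1 j) - s * y1 i).
{ intros i Hi. unfold y1. rewrite pv_defect by auto. apply pv_nonneg; auto.
  intros j Hj. pose proof (Hsup j Hj). lra. }
destruct (classic (exists j1, (j1 < K)%nat /\ rsum K (fun j => B j1 j * y1 j) - s * y1 j1 <> 0)) as [[j1 [Hj1 Hne]]|Hall].
2:{ exists y1. split. intros; apply HN1; auto.
    intros i Hi. destruct (Req_dec (rsum K (fun j => B i j * y1 j) - s * y1 i) 0). lra.
    exfalso; apply Hall; eauto. }
exfalso.
set (z := fun i => rsum K (fun j => B i j * y1 j) - s * y1 i).
assert (Hzj1 : 0 < z j1). { pose proof (Hz1 j1 Hj1). unfold z. lra. }
destruct (spread K B z j1 HB Hr Hz1 Hj1 Hzj1) as [N3 HN3].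
assert (HN3pos : (1 <= N3)%nat).
{ destruct N3. pose proof (HN3 j1 Hj1). unfold pv in H. simpl in H. lra. lia. }
set (y2 := pv K B N3 y1).
assert (Hy2 : forall i, (i < K)%nat -> 0 < y2 i).
{ intros i Hi. unfold y2. eapply Rlt_le_trans. apply (HN1 i Hi). apply pv_ge; auto.
  intros j Hj; apply Rlt_le; apply HN1; auto. }
destruct (argmin K (fun i => pv K B N3 z i / y2 i) HK) as [i2 [Hi2 Hmin]].
set (del := pv K B N3 z i2 / y2 i2).
assert (Hdel : 0 < del). { unfold del. apply Rdiv_lt_0_compat; auto. }
apply (Hno (s + del) y2); [lra|auto|].
intros i Hi. pose proof (Hmin i Hi). fold del in H.
assert (E := pv_defect K B N3 s y1 i Hi). fold y2 in E.
assert (del * y2 i <= pv K B N3 z i).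
{ pose proof (Hy2 i Hi). apply Rmult_le_compat_r with (r := y2 i) in H; [|lra].
  unfold Rdiv in H. rewrite Rmult_assoc in H. rewrite Rinv_l in H by lra. lra. }
assert (pv K B N3 z i = pv K B N3 (fun j => rsum K (fun k => B j k * y1 k) - s * y1 j) i) by auto.
lra.
Qed.


Lemma super_abs K B s x : nonnegM K B -> 0 < s -> eigR K B s x ->
  forall i, (i < K)%nat -> s * Rabs (x i) <= rsum K (fun j => B i j * Rabs (x j)).
Proof.
intros HB Hs He i Hi.
replace (s * Rabs (x i)) with (Rabs (rsum K (fun j => B i j * x j))).
eapply Rle_trans. apply rsum_abs. apply rsum_le. intros j Hj. rewrite Rabs_mult.
rewrite (Rabs_right (B i j)). lra. apply Rle_ge; auto.
rewrite He by auto. rewrite Rabs_mult. rewrite Rabs_right; lra.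
Qed.

Lemma PF K m D rho : (1 <= K)%nat -> stochastic K D ->
  (forall i w, (i < K)%nat -> 0 < m i w) -> irreducible K D -> aperiodic K D -> 0 < rho ->
  perron_eigenvalue K (A2 K m D) (rho ^ 2) ->
  exists g h, (forall i, (i < K)%nat -> 0 < g i) /\ (forall i, (i < K)%nat -> 0 < h i) /\
    (forall k, (k < K)%nat -> rsum K (fun i => g i * A2 K m D i k) = rho ^ 2 * g k) /\
    eigR K (A2 K m D) (rho ^ 2) h.
Proof.
intros HK HD Hm Hirr Hap Hrho [[x [Hxnz Hx]] Hbound].
set (A := A2 K m D). set (s := rho ^ 2).
assert (Hs : 0 < s). { unfold s. apply pow_lt; auto. }
assert (HA : nonnegM K A) by (apply A2_nonneg; auto).
assert (Hr : reach K A) by (apply A2_reach; auto).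
assert (Heig : forall y v, nz K v -> eigR K A y v -> y <= s).
{ intros y v [i [Hi Hv]] He.
  assert (H := Hbound y 0 v (fun _ => 0)).
  assert (sqrt (y * y + 0 * 0) <= rho ^ 2).
  { apply H. exists i. split; auto.
    intros j Hj. split. rewrite He by auto. lra.
    rewrite (rsum_ext K _ (fun _ => 0)) by (intros; lra). rewrite rsum_zero. lra. }
  replace (y * y + 0 * 0) with (Rsqr y) in H0 by (unfold Rsqr; lra).
  rewrite sqrt_Rsqr_abs in H0. pose proof (Rle_abs y). fold s in H0. lra. }
assert (NoR : forall t y, s < t -> (forall i, (i < K)%nat -> 0 < y i) ->
     ~ (forall i, (i < K)%nat -> t * y i <= rsum K (fun j => A i j * y j))).
{ intros t y Ht Hy Hsup. destruct (lemX K A y t HK HA Hy Hsup) as [z [Hz HP]].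
  destruct (PP0_right' K A z HP) as [v [Hv1 Hv2]]. pose proof (Heig z v Hv1 Hv2). lra. }
assert (NoL : forall t y, s < t -> (forall i, (i < K)%nat -> 0 < y i) ->
     ~ (forall i, (i < K)%nat -> t * y i <= rsum K (fun j => tr A i j * y j))).
{ intros t y Ht Hy Hsup. destruct (lemX K (tr A) y t HK (nonneg_tr K A HA) Hy Hsup) as [z [Hz HP]].
  rewrite PP_tr' in HP.
  destruct (PP0_right' K A z HP) as [v [Hv1 Hv2]]. pose proof (Heig z v Hv1 Hv2). lra. }
assert (HxE : eigR K A s x) by exact Hx.
destruct Hxnz as [j0 [Hj0 Hxj0]].
destruct (improve K A s (fun j => Rabs (x j)) j0 HK HA Hr NoR) as [h [Hh1 Hh2]].
{ intros; apply Rabs_pos. } { auto. } { apply Rabs_pos_lt; auto. }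
{ apply super_abs; auto. }
assert (HP : CP.PP K (tr A) s = 0).
{ rewrite PP_tr'. apply (right_PP0' K A s x); auto. exists j0; auto. }
destruct (PP0_right' K (tr A) s HP) as [v [[k0 [Hk0 Hvk0]] Hv2]].
destruct (improve K (tr A) s (fun j => Rabs (v j)) k0 HK (nonneg_tr K A HA) (reach_tr K A Hr) NoL) as [g [Hg1 Hg2]].
{ intros; apply Rabs_pos. } { auto. } { apply Rabs_pos_lt; auto. }
{ apply super_abs; auto. apply nonneg_tr; auto. }
exists g, h. split; auto. split; auto. split; auto.
intros k Hk. rewrite <- (Hg2 k Hk). apply rsum_ext. intros i Hi. unfold tr. lra.
Qed.


Definition dsum K (F : nat -> nat -> R) := rsum K (fun i => rsum K (fun j => F i j)).

Lemma dsum_ext K F G : (forall i j, (i < K)%nat -> (j < K)%nat -> F i j = G i j) -> dsum K F = dsum K G.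
Proof. intros H. unfold dsum. apply rsum_ext. intros i Hi. apply rsum_ext. intros j Hj. auto. Qed.
Lemma dsum_plus K F G : dsum K (fun i j => F i j + G i j) = dsum K F + dsum K G.
Proof. unfold dsum. rewrite <- rsum_plus. apply rsum_ext. intros. apply rsum_plus. Qed.
Lemma dsum_minus K F G : dsum K (fun i j => F i j - G i j) = dsum K F - dsum K G.
Proof. unfold dsum. rewrite <- rsum_minus. apply rsum_ext. intros. apply rsum_minus. Qed.
Lemma dsum_scal K c F : dsum K (fun i j => c * F i j) = c * dsum K F.
Proof. unfold dsum. rewrite <- rsum_scal. apply rsum_ext. intros. apply rsum_scal. Qed.
Lemma dsum_le K F G : (forall i j, (i < K)%nat -> (j < K)%nat -> F i j <= G i j) -> dsum K F <= dsum K G.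
Proof. intros H. unfold dsum. apply rsum_le. intros i Hi. apply rsum_le. intros j Hj. auto. Qed.
Lemma dsum_nonneg K F : (forall i j, (i < K)%nat -> (j < K)%nat -> 0 <= F i j) -> 0 <= dsum K F.
Proof. intros H. unfold dsum. apply rsum_nonneg. intros i Hi. apply rsum_nonneg. auto. Qed.
Lemma dsum_pos K F i j : (forall i j, (i < K)%nat -> (j < K)%nat -> 0 <= F i j) -> (i < K)%nat -> (j < K)%nat -> 0 < F i j -> 0 < dsum K F.
Proof.
intros H Hi Hj Hp. unfold dsum. apply (rsum_pos K _ i); auto.
intros; apply rsum_nonneg; auto. apply (rsum_pos K _ j); auto.
Qed.
Lemma dsum_pos_ex K F : 0 < dsum K F -> exists i j, (i < K)%nat /\ (j < K)%nat /\ 0 < F i j.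
Proof.
intros H. destruct (rsum_pos_ex _ _ H) as [i [Hi H1]]. destruct (rsum_pos_ex _ _ H1) as [j [Hj H2]]. eauto.
Qed.
Lemma dsum_swap K (T : nat -> nat -> nat -> nat -> R) :
  dsum K (fun k l => dsum K (fun i j => T k l i j)) = dsum K (fun i j => dsum K (fun k l => T k l i j)).
Proof.
unfold dsum.
transitivity (rsum K (fun k => rsum K (fun i => rsum K (fun j => rsum K (fun l => T k l i j))))).
{ apply rsum_ext. intros k Hk. rewrite rsum_swap. apply rsum_ext. intros i Hi. apply rsum_swap. }
rewrite rsum_swap. apply rsum_ext. intros i Hi. apply rsum_swap.
Qed.

Lemma ln_le_sub1 x : 0 < x -> ln x <= x - 1.
Proof. intros Hx. pose proof (exp_ineq1_le (ln x)). rewrite exp_ln in H by auto. lra. Qed.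

Lemma ln_le x y : 0 < x -> x <= y -> ln x <= ln y.
Proof. intros Hx Hxy. destruct (Rle_lt_or_eq_dec _ _ Hxy). apply Rlt_le, ln_increasing; auto. subst; lra. Qed.

Lemma jensen2 K Q b : (forall i j, (i < K)%nat -> (j < K)%nat -> 0 <= Q i j) -> dsum K Q = 1 ->
  (forall i j, (i < K)%nat -> (j < K)%nat -> 0 < b i j) ->
  dsum K (fun i j => Q i j * ln (b i j)) <= ln (dsum K (fun i j => Q i j * b i j)).
Proof.
intros HQ H1 Hb.
set (S := dsum K (fun i j => Q i j * b i j)).
assert (HS : 0 < S).
{ assert (0 < dsum K Q) by lra. destruct (dsum_pos_ex _ _ H) as [i [j [Hi [Hj Hq]]]].
  apply (dsum_pos K _ i j); auto. intros; apply Rmult_le_pos; auto; apply Rlt_le; auto.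
  apply Rmult_lt_0_compat; auto. }
assert (dsum K (fun i j => Q i j * (ln (b i j) - ln S)) <= dsum K (fun i j => Q i j * (b i j / S - 1))).
{ apply dsum_le. intros i j Hi Hj. apply Rmult_le_compat_l; auto.
  replace (ln (b i j) - ln S) with (ln (b i j / S)). apply ln_le_sub1. apply Rdiv_lt_0_compat; auto.
  unfold Rdiv. rewrite ln_mult, ln_Rinv; auto. apply Rinv_0_lt_compat; auto. }
rewrite (dsum_ext K (fun i j => Q i j * (ln (b i j) - ln S)) (fun i j => Q i j * ln (b i j) - ln S * Q i j)) in H by (intros; ring).
rewrite (dsum_ext K (fun i j => Q i j * (b i j / S - 1)) (fun i j => / S * (Q i j * b i j) - 1 * Q i j)) in H.
2:{ intros. unfold Rdiv. ring. }
rewrite !dsum_minus, !dsum_scal in H. fold S in H. rewrite H1 in H.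
rewrite Rinv_l in H by lra. lra.
Qed.


Definition ell (m : nat -> env -> R) (D : nat -> nat -> R) (g : nat -> R) (k l : nat) := m k e1 * m l e2 * D k l * g k.
Definition Dh K (D : nat -> nat -> R) (h : nat -> R) (l : nat) := rsum K (fun t => D l t * h t).
Definition Zc K m D g h := dsum K (fun k l => ell m D g k l * Dh K D h l).
Definition fst K m D g h k l := ell m D g k l * Dh K D h l / Zc K m D g h.

Section DV.
Variables (K : nat) (D : nat -> nat -> R) (m : nat -> env -> R) (s : R) (g h : nat -> R).
Hypothesis HK : (1 <= K)%nat.
Hypothesis HD : stochastic K D.
Hypothesis Hm : forall i w, (i < K)%nat -> 0 < m i w.
Hypothesis Hs : 0 < s.
Hypothesis Hg : forall i, (i < K)%nat -> 0 < g i.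
Hypothesis Hh : forall i, (i < K)%nat -> 0 < h i.
Hypothesis HgA : forall k, (k < K)%nat -> rsum K (fun i => g i * A2 K m D i k) = s * g k.
Hypothesis HAh : forall i, (i < K)%nat -> rsum K (fun j => A2 K m D i j * h j) = s * h i.

Lemma dsum_zero K0 : dsum K0 (fun _ _ => 0) = 0.
Proof. unfold dsum. rewrite (rsum_ext K0 _ (fun _ => 0)). apply rsum_zero. intros; apply rsum_zero. Qed.

Lemma D_nn i j : (i < K)%nat -> (j < K)%nat -> 0 <= D i j.
Proof. apply (proj1 HD). Qed.

Lemma ell_nn i j : (i < K)%nat -> (j < K)%nat -> 0 <= ell m D g i j.
Proof.
intros Hi Hj. unfold ell. pose proof (Hm i e1 Hi). pose proof (Hm j e2 Hj). pose proof (D_nn i j Hi Hj). pose proof (Hg i Hi).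
repeat apply Rmult_le_pos; lra.
Qed.

Lemma ell_pos_D i j : (i < K)%nat -> (j < K)%nat -> 0 < ell m D g i j <-> 0 < D i j.
Proof.
intros Hi Hj. unfold ell. pose proof (Hm i e1 Hi). pose proof (Hm j e2 Hj). pose proof (D_nn i j Hi Hj). pose proof (Hg i Hi).
split; intros H3.
destruct (Rle_lt_or_eq_dec _ _ H1); auto. rewrite <- e in H3. lra.
repeat apply Rmult_lt_0_compat; lra.
Qed.

Lemma Dh_pos l : (l < K)%nat -> 0 < Dh K D h l.
Proof.
intros Hl. unfold Dh. assert (H1 := proj2 HD l Hl). assert (0 < rsum K (fun j => D l j)) by lra.
destruct (rsum_pos_ex _ _ H) as [t [Ht Hp]].
apply (rsum_pos K _ t); auto. intros j Hj. apply Rmult_le_pos. apply D_nn; auto. apply Rlt_le; auto.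
apply Rmult_lt_0_compat; auto.
Qed.

Lemma Z_pos : 0 < Zc K m D g h.
Proof.
assert (H1 := proj2 HD 0%nat ltac:(lia)). assert (0 < rsum K (fun j => D 0%nat j)) by lra.
destruct (rsum_pos_ex _ _ H) as [l [Hl Hp]].
unfold Zc. apply (dsum_pos K _ 0%nat l); auto; try lia.
intros i j Hi Hj. apply Rmult_le_pos. apply ell_nn; auto. apply Rlt_le, Dh_pos; auto.
apply Rmult_lt_0_compat. apply ell_pos_D; auto; lia. apply Dh_pos; auto.
Qed.

Lemma I1 k : (k < K)%nat -> dsum K (fun i j => ell m D g i j * D j k) = s * g k.
Proof.
intros Hk. rewrite <- HgA by auto. unfold dsum, A2. apply rsum_ext. intros i Hi.
rewrite <- rsum_scal. apply rsum_ext. intros j Hj. unfold ell. ring.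
Qed.

Lemma I2 j : (j < K)%nat ->
  rsum K (fun k => D j k * rsum K (fun l => m k e1 * D k l * m l e2 * Dh K D h l)) = s * Dh K D h j.
Proof.
intros Hj. unfold Dh at 2. rewrite <- rsum_scal. apply rsum_ext. intros k Hk.
assert (E : rsum K (fun l => m k e1 * D k l * m l e2 * Dh K D h l) = s * h k).
2:{ rewrite E. ring. }
rewrite <- HAh by auto.
unfold A2, Dh.
rewrite (rsum_ext K _ (fun l => rsum K (fun t => m k e1 * D k l * m l e2 * D l t * h t))).
2:{ intros l Hl. rewrite <- rsum_scal. apply rsum_ext. intros; ring. }
rewrite rsum_swap. apply rsum_ext. intros t Ht. rewrite <- rsum_scal_r. auto.
Qed.

Lemma fst_nn k l : (k < K)%nat -> (l < K)%nat -> 0 <= fst K m D g h k l.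
Proof.
intros. unfold fst. apply Rmult_le_pos. apply Rmult_le_pos. apply ell_nn; auto. apply Rlt_le, Dh_pos; auto.
apply Rlt_le, Rinv_0_lt_compat, Z_pos.
Qed.

Lemma fst_sum : dsum K (fst K m D g h) = 1.
Proof.
unfold fst. rewrite (dsum_ext K _ (fun k l => / Zc K m D g h * (ell m D g k l * Dh K D h l))) by (intros; unfold Rdiv; ring).
rewrite dsum_scal. fold (Zc K m D g h). pose proof Z_pos. field. lra.
Qed.

Lemma fst_pos_D k l : (k < K)%nat -> (l < K)%nat -> 0 < fst K m D g h k l -> 0 < D k l.
Proof.
intros Hk Hl H. apply ell_pos_D; auto. destruct (Rle_lt_or_eq_dec _ _ (ell_nn k l Hk Hl)); auto.
unfold fst in H. rewrite <- e in H. lra.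
Qed.

Lemma fst_vB v k l : vpos K v -> (k < K)%nat -> (l < K)%nat -> 0 < fst K m D g h k l -> 0 < vB K D v k l.
Proof.
intros Hv Hk Hl H. pose proof (fst_pos_D k l Hk Hl H) as HDkl.
assert (0 < dsum K (fun i j => ell m D g i j * D j k)). { rewrite I1 by auto. apply Rmult_lt_0_compat; auto. }
destruct (dsum_pos_ex _ _ H0) as [i [j [Hi [Hj Hp]]]].
apply prod_pos in Hp; [|apply ell_nn; auto|apply D_nn; auto]. destruct Hp as [_ HDjk].
unfold vB. apply (dsum_pos K _ i j); auto.
intros; apply Rmult_le_pos. apply Rlt_le; apply Hv; auto. apply Rmult_le_pos; apply D_nn; auto.
apply Rmult_lt_0_compat. apply Hv; auto. apply Rmult_lt_0_compat; auto.
Qed.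


Definition Tk k l i j := ell m D g i j * D j k * D k l * m k e1 * m l e2 * Dh K D h l / (s * Zc K m D g h).

Lemma I3 i j : (i < K)%nat -> (j < K)%nat -> dsum K (fun k l => Tk k l i j) = fst K m D g h i j.
Proof.
intros Hi Hj. unfold Tk, fst.
rewrite (dsum_ext K _ (fun k l => (ell m D g i j / (s * Zc K m D g h)) * (D j k * (m k e1 * D k l * m l e2 * Dh K D h l)))) by (intros; unfold Rdiv; ring).
rewrite dsum_scal. unfold dsum.
rewrite (rsum_ext K _ (fun k => D j k * rsum K (fun l => m k e1 * D k l * m l e2 * Dh K D h l))).
2:{ intros k Hk. rewrite rsum_scal. auto. }
rewrite I2 by auto. pose proof Z_pos. field. split; lra.
Qed.

Lemma pos_QB Q b : (forall i j, (i < K)%nat -> (j < K)%nat -> 0 <= Q i j) -> dsum K Q = 1 ->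
  (forall i j, (i < K)%nat -> (j < K)%nat -> 0 < b i j) -> 0 < dsum K (fun i j => Q i j * b i j).
Proof.
intros HQ H1 Hb. assert (0 < dsum K Q) by lra. destruct (dsum_pos_ex _ _ H) as [i [j [Hi [Hj Hq]]]].
apply (dsum_pos K _ i j); auto. intros; apply Rmult_le_pos; auto; apply Rlt_le; auto.
apply Rmult_lt_0_compat; auto.
Qed.

Lemma ln_div a b : 0 < a -> 0 < b -> ln (a / b) = ln a - ln b.
Proof. intros. unfold Rdiv. rewrite ln_mult, ln_Rinv; auto; try lra. apply Rinv_0_lt_compat; auto. Qed.

Lemma PK v k l : vpos K v -> (k < K)%nat -> (l < K)%nat ->
  let L := fun i j => if Rlt_dec 0 (ell m D g i j) then ln (v i j / ell m D g i j) else 0 in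
  fst K m D g h k l * ln (v k l / vB K D v k l) <=
  fst K m D g h k l * ln (m k e1 * m l e2) - fst K m D g h k l * ln s
  - (dsum K (fun i j => Tk k l i j * L i j) - fst K m D g h k l * L k l).
Proof.
intros Hv Hk Hl L.
destruct (Rle_lt_or_eq_dec _ _ (fst_nn k l Hk Hl)) as [Hf|Hf].
2:{ rewrite <- Hf.
    assert (HD0 : D k l = 0).
    { destruct (Rle_lt_or_eq_dec _ _ (D_nn k l Hk Hl)) as [Hp|Hp]; auto.
      exfalso. unfold fst in Hf. pose proof (proj2 (ell_pos_D k l Hk Hl) Hp). pose proof (Dh_pos l Hl). pose proof Z_pos.
      assert (0 < ell m D g k l * Dh K D h l / Zc K m D g h). apply Rdiv_lt_0_compat; auto. apply Rmult_lt_0_compat; auto. lra. }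
    rewrite (dsum_ext K _ (fun _ _ => 0)). rewrite dsum_zero. lra.
    intros i j Hi Hj. unfold Tk. rewrite HD0. unfold Rdiv. ring. }
pose proof (fst_pos_D k l Hk Hl Hf) as HDkl.
pose proof (proj2 (ell_pos_D k l Hk Hl) HDkl) as Hell.
pose proof (fst_vB v k l Hv Hk Hl Hf) as HvB.
pose proof (Hv k l Hk Hl) as Hvkl.
pose proof (Hm k e1 Hk) as Hm1. pose proof (Hm l e2 Hl) as Hm2.
set (Q := fun i j => ell m D g i j * D j k * D k l * m k e1 * m l e2 / (s * ell m D g k l)).
set (b := fun i j => if Rlt_dec 0 (ell m D g i j) then (v i j / ell m D g i j) / (v k l / ell m D g k l) else 1).
assert (HQ : forall i j, (i < K)%nat -> (j < K)%nat -> 0 <= Q i j).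
{ intros i j Hi Hj. unfold Q. apply Rmult_le_pos. pose proof (ell_nn i j Hi Hj). pose proof (D_nn j k Hj Hk).
  generalize dependent (ell m D g i j). intros e He. repeat apply Rmult_le_pos; lra.
  apply Rlt_le, Rinv_0_lt_compat. apply Rmult_lt_0_compat; auto. }
assert (HQ1 : dsum K Q = 1).
{ unfold Q. rewrite (dsum_ext K _ (fun i j => (D k l * m k e1 * m l e2 / (s * ell m D g k l)) * (ell m D g i j * D j k))) by (intros; unfold Rdiv; ring).
  rewrite dsum_scal. rewrite I1 by auto. unfold ell. pose proof (Hg k Hk). field. split; [|lra].
  repeat apply Rmult_integral_contrapositive_currified; lra. }
assert (Hb : forall i j, (i < K)%nat -> (j < K)%nat -> 0 < b i j).
{ intros i j Hi Hj. unfold b. destruct (Rlt_dec 0 (ell m D g i j)); [|lra].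
  repeat apply Rdiv_lt_0_compat; auto. }
assert (J := jensen2 K Q b HQ HQ1 Hb).
assert (HQb : dsum K (fun i j => Q i j * b i j) <= m k e1 * m l e2 * vB K D v k l / (s * v k l)).
{ transitivity (dsum K (fun i j => (m k e1 * m l e2 / (s * v k l)) * (v i j * (D j k * D k l)))).
  2:{ right. rewrite dsum_scal. change (vB K D v k l) with (dsum K (fun i j => v i j * (D j k * D k l))).
      field. lra. }
  apply dsum_le. intros i j Hi Hj. unfold Q, b. destruct (Rlt_dec 0 (ell m D g i j)).
  - right. field. all: repeat split; lra.
  - pose proof (ell_nn i j Hi Hj). assert (ell m D g i j = 0) by lra. rewrite H0.
    pose proof (Hv i j Hi Hj). pose proof (D_nn j k Hj Hk).
    assert (0 <= m k e1 * m l e2 / (s * v k l) * (v i j * (D j k * D k l))).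
    { apply Rmult_le_pos. apply Rlt_le. apply Rdiv_lt_0_compat. apply Rmult_lt_0_compat; auto. apply Rmult_lt_0_compat; auto.
      apply Rmult_le_pos. lra. apply Rmult_le_pos; lra. }
    unfold Rdiv. lra. }
assert (HlnQb : ln (dsum K (fun i j => Q i j * b i j)) <= ln (m k e1 * m l e2 * vB K D v k l / (s * v k l))).
{ apply ln_le; auto. apply pos_QB; auto. }
assert (HQL : dsum K (fun i j => Q i j * ln (b i j)) = dsum K (fun i j => Q i j * L i j) - L k l).
{ transitivity (dsum K (fun i j => Q i j * L i j - L k l * Q i j)).
  apply dsum_ext. intros i j Hi Hj. unfold b, L.
  destruct (Rlt_dec 0 (ell m D g i j)).
  destruct (Rlt_dec 0 (ell m D g k l)); [|lra].
  rewrite ln_div. ring. apply Rdiv_lt_0_compat; auto. apply Rdiv_lt_0_compat; auto.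
  assert (Q i j = 0). { unfold Q. pose proof (ell_nn i j Hi Hj). assert (ell m D g i j = 0) by lra. rewrite H0. unfold Rdiv. ring. }
  rewrite H. ring.
  rewrite dsum_minus, dsum_scal, HQ1. ring. }
assert (HTQ : dsum K (fun i j => Tk k l i j * L i j) = fst K m D g h k l * dsum K (fun i j => Q i j * L i j)).
{ rewrite <- dsum_scal. apply dsum_ext. intros i j Hi Hj. unfold Tk, Q, fst. pose proof Z_pos. field. repeat split; lra. }
rewrite HTQ.
assert (E1 : ln (m k e1 * m l e2 * vB K D v k l / (s * v k l)) = ln (m k e1 * m l e2) + ln (vB K D v k l) - ln s - ln (v k l)).
{ assert (0 < m k e1 * m l e2) by (apply Rmult_lt_0_compat; auto).
  rewrite ln_div. rewrite (ln_mult (m k e1 * m l e2) (vB K D v k l)) by auto. rewrite (ln_mult s (v k l)) by auto. ring.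
  apply Rmult_lt_0_compat; auto. apply Rmult_lt_0_compat; auto. }
rewrite ln_div by auto.
assert (ln (v k l) - ln (vB K D v k l) <= ln (m k e1 * m l e2) - ln s - (dsum K (fun i j => Q i j * L i j) - L k l)) by lra.
apply Rmult_le_compat_l with (r := fst K m D g h k l) in H; [|lra]. lra.
Qed.

Lemma DVbound v : vpos K v -> Jfun K D (fst K m D g h) v <= Rfun K m (fst K m D g h) - ln s.
Proof.
intros Hv.
set (f := fst K m D g h).
set (L := fun i j => if Rlt_dec 0 (ell m D g i j) then ln (v i j / ell m D g i j) else 0).
change (Jfun K D f v) with (dsum K (fun k l => f k l * ln (v k l / vB K D v k l))).
change (Rfun K m f) with (dsum K (fun k l => f k l * ln (m k e1 * m l e2))).
eapply Rle_trans.
{ apply dsum_le. intros k l Hk Hl. apply (PK v k l Hv Hk Hl). }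
fold L. fold f.
assert (Sw : dsum K (fun k l => dsum K (fun i j => Tk k l i j * L i j)) = dsum K (fun i j => f i j * L i j)).
{ rewrite (dsum_swap K (fun k l i j => Tk k l i j * L i j)). apply dsum_ext. intros i j Hi Hj.
  unfold f. rewrite <- I3 by auto.
  rewrite (dsum_ext K _ (fun k l => L i j * Tk k l i j)) by (intros; ring). rewrite dsum_scal. ring. }
rewrite (dsum_ext K _ (fun k l => (f k l * ln (m k e1 * m l e2) - ln s * f k l) - (dsum K (fun i j => Tk k l i j * L i j) - f k l * L k l))) by (intros; ring).
rewrite !dsum_minus. rewrite dsum_scal. rewrite Sw. unfold f. rewrite fst_sum. right. ring.
Qed.

End DV.


Lemma approx K D m s g f b : (1 <= K)%nat -> stochastic K D -> (forall i w, (i < K)%nat -> 0 < m i w) ->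
  0 < s -> (forall i, (i < K)%nat -> 0 < g i) ->
  (forall k, (k < K)%nat -> rsum K (fun i => g i * A2 K m D i k) = s * g k) ->
  in_FE K f -> (forall k l, (k < K)%nat -> (l < K)%nat -> 0 < f k l -> 0 < D k l) ->
  (forall v, vpos K v -> Jfun K D f v <= b) -> Rfun K m f - ln s <= b.
Proof.
intros HK HD Hm Hs Hg HgA [Hf0 Hf1] HfD Hb.
set (W := fun k => dsum K (fun i j => D j k)).
assert (HW : forall k, (k < K)%nat -> 0 <= W k).
{ intros k Hk. unfold W. apply dsum_nonneg. intros; apply (proj1 HD); auto. }
set (N := rsum K (fun k => W k / g k)).
assert (HN : forall k, (k < K)%nat -> W k / g k <= N).
{ intros k Hk. unfold N. apply (rsum_ge_term K (fun k => W k / g k)); auto.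
  intros j Hj. apply Rmult_le_pos; auto. apply Rlt_le, Rinv_0_lt_compat; auto. }
assert (HN0 : 0 <= N). { pose proof (HN 0%nat ltac:(lia)). pose proof (HW 0%nat ltac:(lia)).
  pose proof (Hg 0%nat ltac:(lia)). assert (0 <= W 0%nat / g 0%nat) by (apply Rmult_le_pos; [lra| apply Rlt_le, Rinv_0_lt_compat; lra]). lra. }
assert (Hdel : forall del, 0 < del -> Rfun K m f - ln (s + del * N) <= b).
{ intros del Hd.
  set (v := fun i j => ell m D g i j + del).
  assert (Hv : vpos K v). { intros i j Hi Hj. unfold v. pose proof (ell_nn K D m g HD Hm Hg i j Hi Hj). lra. }
  assert (HvB : forall k l, (k < K)%nat -> (l < K)%nat -> vB K D v k l = D k l * (s * g k + del * W k)).
  { intros k l Hk Hl. unfold vB, v.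
    change (dsum K (fun i j => (ell m D g i j + del) * (D j k * D k l)) = D k l * (s * g k + del * W k)).
    rewrite (dsum_ext K _ (fun i j => D k l * (ell m D g i j * D j k) + (D k l * del) * D j k)) by (intros; ring).
    rewrite dsum_plus, !dsum_scal. rewrite (I1 K D m s g HgA k Hk). unfold W. ring. }
  eapply Rle_trans; [|apply (Hb v Hv)].
  change (Jfun K D f v) with (dsum K (fun k l => f k l * ln (v k l / vB K D v k l))).
  change (Rfun K m f) with (dsum K (fun k l => f k l * ln (m k e1 * m l e2))).
  replace (dsum K (fun k l => f k l * ln (m k e1 * m l e2)) - ln (s + del * N))
    with (dsum K (fun k l => f k l * (ln (m k e1 * m l e2) - ln (s + del * N)))).
  2:{ rewrite (dsum_ext K _ (fun k l => f k l * ln (m k e1 * m l e2) - ln (s + del * N) * f k l)) by (intros; ring).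
      rewrite dsum_minus, dsum_scal. change (dsum K f) with (rsum K (fun i => rsum K (fun j => f i j))). rewrite Hf1. ring. }
  apply dsum_le. intros k l Hk Hl.
  destruct (Rle_lt_or_eq_dec _ _ (Hf0 k l Hk Hl)) as [Hfp|Hfz].
  2:{ rewrite <- Hfz. lra. }
  apply Rmult_le_compat_l; [lra|].
  pose proof (HfD k l Hk Hl Hfp) as HDkl. pose proof (Hg k Hk). pose proof (Hm k e1 Hk). pose proof (Hm l e2 Hl).
  pose proof (HW k Hk). pose proof (HN k Hk).
  assert (Hsd : 0 < s + del * N) by nra.
  assert (Hm12 : 0 < m k e1 * m l e2) by (apply Rmult_lt_0_compat; auto).
  rewrite HvB by auto.
  assert (Hvb : 0 < D k l * (s * g k + del * W k)) by (apply Rmult_lt_0_compat; nra).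
  assert (Hvk : 0 < v k l) by (apply Hv; auto).
  replace (ln (m k e1 * m l e2) - ln (s + del * N)) with (ln (m k e1 * m l e2 / (s + del * N))).
  2:{ unfold Rdiv. rewrite ln_mult, ln_Rinv; auto. apply Rinv_0_lt_compat; auto. }
  apply ln_le. apply Rdiv_lt_0_compat; auto.
  apply (Rmult_le_reg_r ((s + del * N) * (D k l * (s * g k + del * W k)))).
  apply Rmult_lt_0_compat; auto.
  replace (m k e1 * m l e2 / (s + del * N) * ((s + del * N) * (D k l * (s * g k + del * W k))))
    with (m k e1 * m l e2 * (D k l * (s * g k + del * W k))) by (field; repeat split; nra).
  replace (v k l / (D k l * (s * g k + del * W k)) * ((s + del * N) * (D k l * (s * g k + del * W k))))
    with (v k l * (s + del * N)) by (field; repeat split; nra).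
  assert (W k <= N * g k).
  { unfold Rdiv in H3. apply Rmult_le_compat_r with (r := g k) in H3; [|lra].
    rewrite Rmult_assoc, Rinv_l in H3 by lra. lra. }
  assert (Hell : ell m D g k l <= v k l) by (unfold v; lra).
  unfold ell in Hell.
  assert (m k e1 * m l e2 * (D k l * (s * g k + del * W k)) <= m k e1 * m l e2 * D k l * g k * (s + del * N)).
  { assert (0 <= m k e1 * m l e2 * D k l) by (apply Rmult_le_pos; lra).
    assert (s * g k + del * W k <= g k * (s + del * N)) by nra. nra. }
  nra. }
destruct (Rle_or_lt (Rfun K m f - ln s) b) as [Hok|Hbad]; auto.
exfalso. set (eps := Rfun K m f - ln s - b).
assert (Heps : 0 < eps) by (unfold eps; lra).
set (del := s * (exp eps - 1) / (N + 1)).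
assert (Hexp : 1 < exp eps). { pose proof (exp_ineq1 eps ltac:(lra)). lra. }
assert (Hdp : 0 < del). { unfold del. apply Rdiv_lt_0_compat; [|lra]. apply Rmult_lt_0_compat; lra. }
pose proof (Hdel del Hdp).
assert (del * N < s * (exp eps - 1)).
{ unfold del. apply (Rmult_lt_reg_r (N + 1)); [lra|].
  replace (s * (exp eps - 1) / (N + 1) * N * (N + 1)) with (s * (exp eps - 1) * N) by (field; repeat split; nra).
  assert (0 < s * (exp eps - 1)) by (apply Rmult_lt_0_compat; lra). nra. }
assert (ln (s + del * N) < ln s + eps).
{ replace (ln s + eps) with (ln (s * exp eps)).
  apply ln_increasing. nra. nra.
  rewrite ln_mult, ln_exp; auto. apply exp_pos. }
unfold eps in *. lra.
Qed.


Theorem theorem5p3 (K : nat) (D : nat -> nat -> R)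
  (p : nat -> env -> nat -> R) (m : nat -> env -> R) (rho : R) :
  (1 <= K)%nat ->
  stochastic K D ->
  (forall i w n, (i < K)%nat -> 0 <= p i w n) ->
  (forall i w, (i < K)%nat -> infinite_sum (p i w) 1) ->
  (forall i w, (i < K)%nat ->
     infinite_sum (fun n => INR n * p i w n) (m i w)) ->
  (forall i w, (i < K)%nat ->
     exists s, infinite_sum (fun n => INR n * logp (INR n) * p i w n) s) ->
  (forall i w, (i < K)%nat -> 0 < m i w) ->
  irreducible K D ->
  aperiodic K D ->
  0 < rho ->
  perron_eigenvalue K (A2 K m D) (rho ^ 2) ->
  (exists f c, in_FE K f /\ Ival K D f c /\ Rfun K m f - c = 2 * ln rho) /\
  (forall f c, in_FE K f -> Ival K D f c -> Rfun K m f - c <= 2 * ln rho).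
Proof.
intros HK HD _ _ _ _ Hm Hirr Hap Hrho Hperr.
destruct (PF K m D rho HK HD Hm Hirr Hap Hrho Hperr) as [g [h [Hg [Hh [HgA HAh]]]]].
assert (Hs : 0 < rho ^ 2) by (apply pow_lt; auto).
assert (Hln : ln (rho ^ 2) = 2 * ln rho).
{ simpl. rewrite Rmult_1_r. rewrite ln_mult by auto. ring. }
split.
- exists (fst K m D g h), (Rfun K m (fst K m D g h) - ln (rho ^ 2)).
  split; [split|split].
  + intros i j Hi Hj. apply (fst_nn K D m g h HK HD Hm Hg Hh); auto.
  + exact (fst_sum K D m g h HK HD Hm Hg Hh).
  + split.
    * intros v Hv k l Hk Hl Hf. apply (fst_vB K D m (rho ^ 2) g h HD Hm Hs Hg HgA v k l Hv Hk Hl Hf).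
    * split.
      -- intros y [v [Hv ->]]. apply (DVbound K D m (rho ^ 2) g h HK HD Hm Hs Hg Hh HgA HAh v Hv).
      -- intros b Hb. apply (approx K D m (rho ^ 2) g (fst K m D g h) b HK HD Hm Hs Hg HgA).
         split. intros i j Hi Hj. apply (fst_nn K D m g h HK HD Hm Hg Hh); auto.
         exact (fst_sum K D m g h HK HD Hm Hg Hh).
         intros k l Hk Hl Hf. apply (fst_pos_D K D m g h HD Hm Hg k l Hk Hl Hf).
         intros v Hv. apply Hb. exists v. split; auto.
  + lra.
- intros f c Hf [Hc1 [Hc2 Hc3]].
  assert (HfD : forall k l, (k < K)%nat -> (l < K)%nat -> 0 < f k l -> 0 < D k l).
  { intros k l Hk Hl Hfp.
    assert (H1 : 0 < vB K D (fun _ _ => 1) k l). { apply (Hc1 (fun _ _ => 1)); auto. intros ? ? ? ?; lra. }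
    destruct (Rle_lt_or_eq_dec _ _ (proj1 HD k l Hk Hl)) as [Hp|Hz]; auto.
    exfalso. unfold vB in H1. rewrite <- Hz in H1.
    rewrite (rsum_ext K _ (fun _ => 0)) in H1. rewrite rsum_zero in H1. lra.
    intros i Hi. rewrite (rsum_ext K _ (fun _ => 0)). apply rsum_zero. intros; ring. }
  assert (H := approx K D m (rho ^ 2) g f c HK HD Hm Hs Hg HgA Hf HfD).
  assert (Rfun K m f - ln (rho ^ 2) <= c).
  { apply H. intros v Hv. apply Hc2. exists v. split; auto. }
  lra.
Qed.
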